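(* Let $b^2>a^2>0$, $\theta\in[0,1]$, and let $u$ solve $$u_{tt}-a^2\Delta u-(b^2-a^2)\nabla\operatorname{div}u+(-\Delta)^{\theta}u_t=0\ \text{ on }(0,\infty)\times\mathbb{R}^3,\qquad (u,u_t)(0,\cdot)=(u_0,u_1).$$ Let $\hat u(t,\xi)$ be its partial Fourier transform in $x$ and $$E_{\rm pha}(\hat u)(t,\xi):=|\hat u_t(t,\xi)|^2+a^2|\xi|^2|\hat u(t,\xi)|^2+(b^2-a^2)|\xi\cdot\hat u(t,\xi)|^2 .$$ Then for a sufficiently small constant $\varepsilon>0$ there is $c>0$ such that for all $t\ge0$ $$E_{\rm pha}(\hat u)(t,\xi)\lesssim\begin{cases}e^{-c|\xi|^{2\max\{1-\theta;\theta\}}t}E_{\rm pha}(\hat u)(0,\xi)&\text{if }|\xi|<\varepsilon,\\ e^{-ct}E_{\rm pha}(\hat u)(0,\xi)&\text{if }|\xi|\ge\varepsilon.\end{cases}$$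
   Context: $(-\Delta)^\theta$ is the Fourier multiplier with symbol $|\xi|^{2\theta}$; $\xi\cdot\hat u$ is the (bilinear) inner product in $\mathbb{C}^3$. $\lesssim$ hides a constant independent of $t,\xi$ and data. *)

(* Defs.v *)
From Stdlib Require Import Reals.
From Coquelicot Require Import Coquelicot.
Open Scope R_scope.

(* Vectors of R^3 / C^3 are represented as functions on nat; only the
   indices 0, 1, 2 are used. *)

Definition xnorm (xi : nat -> R) : R :=
  sqrt (xi 0%nat ^ 2 + xi 1%nat ^ 2 + xi 2%nat ^ 2).

Definition dotc (xi : nat -> R) (w : nat -> C) : C :=
  Cplus (Cplus (Cmult (RtoC (xi 0%nat)) (w 0%nat))
               (Cmult (RtoC (xi 1%nat)) (w 1%nat)))
        (Cmult (RtoC (xi 2%nat)) (w 2%nat)).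

Definition csq (w : nat -> C) : R :=
  Cmod (w 0%nat) ^ 2 + Cmod (w 1%nat) ^ 2 + Cmod (w 2%nat) ^ 2.

(* real power x^y for x >= 0, with the conventions 0^0 = 1 and 0^y = 0 for y > 0
   (Stdlib's Rpower gives Rpower 0 y = 1, which is not the symbol |xi|^(2 theta)). *)
Definition rpow (x y : R) : R :=
  if Req_EM_T x 0 then (if Req_EM_T y 0 then 1 else 0) else Rpower x y.

Definition Epha (a b : R) (xi : nat -> R) (w v : nat -> C) : R :=
  csq v + a ^ 2 * xnorm xi ^ 2 * csq w + (b ^ 2 - a ^ 2) * Cmod (dotc xi w) ^ 2.

(* The partial Fourier transform (in x) of the system
     u_tt - a^2 Lap u - (b^2-a^2) grad div u + (-Lap)^theta u_t = 0
   at frequency xi: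
     w'' + a^2 |xi|^2 w + (b^2 - a^2) xi (xi . w) + |xi|^(2 theta) w' = 0  on (0,oo),
   with w = hat u(.,xi), v = hat u_t(.,xi) = w', and (w, w') continuous up to t = 0. *)
Definition fourier_solution (a b theta : R) (xi : nat -> R)
    (w v : R -> nat -> C) : Prop :=
  forall j : nat, (j < 3)%nat ->
    (forall t, 0 < t -> is_derive (fun s => w s j) t (v t j)) /\
    (forall t, 0 < t ->
       is_derive (fun s => v s j) t
         (Cminus
           (Cminus
             (Copp (Cmult (RtoC (a ^ 2 * xnorm xi ^ 2)) (w t j)))
             (Cmult (RtoC ((b ^ 2 - a ^ 2) * xi j)) (dotc xi (w t))))
           (Cmult (RtoC (rpow (xnorm xi) (2 * theta))) (v t j)))) /\
    filterlim (fun s => w s j) (at_right 0) (locally (w 0 j)) /\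
    filterlim (fun s => v s j) (at_right 0) (locally (v 0 j)).

(* Main.v *)
Require Import Defs.
From Stdlib Require Import Reals Lra Psatz.
From Coquelicot Require Import Coquelicot.
Open Scope R_scope.

Lemma alg_main (A B mu d al q x0 x1 x2 u0 u1 u2 : R) :
  0 < A -> 0 <= B -> 0 <= d -> 0 <= al -> al <= d -> al * d <= A * mu -> al ^ 2 <= A * mu ->
  let U := u0^2+u1^2+u2^2 in let X := x0^2+x1^2+x2^2 in let P := u0*x0+u1*x1+u2*x2 in
  let Q := A*mu*X + B*q^2 in
  al / 3 * (U + Q + al * P) + (-2*d*U + al*U - al*Q - al*d*P) <= 0.
Proof.
  intros HA HB Hd Hal Hald H1 H2 U X P Q.
  assert (HU : 0 <= U) by (unfold U; repeat apply Rplus_le_le_0_compat; apply pow2_ge_0).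
  assert (HX : 0 <= X) by (unfold X; repeat apply Rplus_le_le_0_compat; apply pow2_ge_0).
  assert (Hq : 0 <= B * q^2) by (apply Rmult_le_pos; [lra| apply pow2_ge_0]).
  assert (S2 : 0 <= U + al^2*X + 2*al*P).
  { assert (0 <= (u0+al*x0)^2 + (u1+al*x1)^2 + (u2+al*x2)^2) by (repeat apply Rplus_le_le_0_compat; apply pow2_ge_0).
    assert (Eq : (u0+al*x0)^2 + (u1+al*x1)^2 + (u2+al*x2)^2 = U + al^2*X + 2*al*P) by (unfold U, X, P; ring). lra. }
  set (c1 := d - al/3).
  assert (Hc1 : 0 <= c1) by (unfold c1; lra).
  assert (T1 : - c1 * al * P <= c1 * (U + al^2*X) / 2).
  { assert (0 <= c1 * (U + al^2*X + 2*al*P)) by (apply Rmult_le_pos; auto). lra. }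
  assert (T2 : c1 * al^2 * X <= al * A * mu * X).
  { assert (c1 * al^2 <= al * A * mu).
    { assert (c1 * al^2 <= d * al^2) by (unfold c1; nra). nra. }
    nra. }
  assert (T3 : A*mu*X <= Q) by (unfold Q; lra).
  assert (Heq : al / 3 * (U + Q + al * P) + (-2*d*U + al*U - al*Q - al*d*P)
           = (4*al/3 - 2*d)*U - (2*al/3)*Q - c1 * al * P) by (unfold c1; field).
  rewrite Heq.
  assert (al * (A*mu*X) <= al * Q) by (apply Rmult_le_compat_l; lra).
  assert (Hk : 4*al/3 - 2*d + c1/2 <= 0) by (unfold c1; lra).
  assert ((4*al/3 - 2*d + c1/2) * U <= 0).
  { rewrite <- (Rmult_0_l U). apply Rmult_le_compat_r; lra. }
  assert (0 <= al * (A*mu*X)) by (apply Rmult_le_pos; [lra| nra]).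
  lra.
Qed.

Lemma alg_equiv (A B mu al q x0 x1 x2 u0 u1 u2 : R) :
  0 < A -> 0 <= B -> 0 <= al -> al ^ 2 <= A * mu ->
  let U := u0^2+u1^2+u2^2 in let X := x0^2+x1^2+x2^2 in let P := u0*x0+u1*x1+u2*x2 in
  let Q := A*mu*X + B*q^2 in
  (U + Q) / 2 <= U + Q + al * P /\ U + Q + al * P <= 3 * (U + Q) / 2.
Proof.
  intros HA HB Hal H2 U X P Q.
  assert (HX : 0 <= X) by (unfold X; repeat apply Rplus_le_le_0_compat; apply pow2_ge_0).
  assert (Hq : 0 <= B * q^2) by (apply Rmult_le_pos; [lra| apply pow2_ge_0]).
  assert (S1 : 0 <= U + al^2*X - 2*al*P).
  { assert (0 <= (u0-al*x0)^2 + (u1-al*x1)^2 + (u2-al*x2)^2) by (repeat apply Rplus_le_le_0_compat; apply pow2_ge_0).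
    assert (Eq : (u0-al*x0)^2 + (u1-al*x1)^2 + (u2-al*x2)^2 = U + al^2*X - 2*al*P) by (unfold U, X, P; ring). lra. }
  assert (S2 : 0 <= U + al^2*X + 2*al*P).
  { assert (0 <= (u0+al*x0)^2 + (u1+al*x1)^2 + (u2+al*x2)^2) by (repeat apply Rplus_le_le_0_compat; apply pow2_ge_0).
    assert (Eq : (u0+al*x0)^2 + (u1+al*x1)^2 + (u2+al*x2)^2 = U + al^2*X + 2*al*P) by (unfold U, X, P; ring). lra. }
  assert (al^2 * X <= A*mu*X) by nra.
  unfold Q. split; nra.
Qed.


Lemma lim_mult (f g : R -> R) F {FF : Filter F} lf lg :
  filterlim f F (locally lf) -> filterlim g F (locally lg) ->
  filterlim (fun s => f s * g s) F (locally (lf * lg)).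
Proof.
  intros Hf Hg.
  apply (filterlim_comp_2 f g Rmult Hf Hg).
  apply (@filterlim_mult R_AbsRing lf lg).
Qed.

Lemma lim_plus (f g : R -> R) F {FF : Filter F} lf lg :
  filterlim f F (locally lf) -> filterlim g F (locally lg) ->
  filterlim (fun s => f s + g s) F (locally (lf + lg)).
Proof.
  intros Hf Hg.
  apply (filterlim_comp_2 f g Rplus Hf Hg).
  apply (@filterlim_plus R_AbsRing R_NormedModule lf lg).
Qed.

Lemma lim_const F {FF : Filter F} (c : R) :
  filterlim (fun _ : R => c) F (locally c).
Proof. apply filterlim_const. Qed.

Lemma gronwall (L Ld : R -> R) (k : R) :
  (forall t, 0 < t -> is_derive L t (Ld t)) ->
  (forall t, 0 < t -> k * L t + Ld t <= 0) ->
  filterlim L (at_right 0) (locally (L 0)) ->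
  forall t, 0 <= t -> L t <= exp (- k * t) * L 0.
Proof.
  intros HD Hineq Hlim t Ht.
  destruct (Req_dec t 0) as [->|Ht0].
  { rewrite Rmult_0_r, exp_0. lra. }
  assert (Htp : 0 < t) by lra.
  set (g := fun s => exp (k * s) * L s).
  assert (Hgd : forall s, 0 < s -> is_derive g s (exp (k * s) * (k * L s + Ld s))).
  { intros s Hs. unfold g.
    evar (e : R).
    assert (He : is_derive (fun s => exp (k * s)) s e).
    { unfold e. auto_derive. exact I. reflexivity. }
    replace (exp (k * s) * (k * L s + Ld s)) with (e * L s + exp (k * s) * Ld s).
    apply (is_derive_mult (fun s => exp (k*s)) L s e (Ld s) He (HD s Hs)).
    intros; apply Rmult_comm.
    unfold e. ring. }
  assert (Hdec : forall s, 0 < s -> s < t -> g t <= g s).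
  { intros s Hs Hst.
    destruct (MVT_gen g s t (fun s => exp (k * s) * (k * L s + Ld s))) as [c [Hc Heq]].
    - intros x Hx. apply Hgd. unfold Rmin in Hx; destruct (Rle_dec s t); lra.
    - intros x Hx. apply continuity_pt_filterlim.
      assert (0 < x) by (unfold Rmin in Hx; destruct (Rle_dec s t); lra).
      exact (@ex_derive_continuous R_AbsRing R_NormedModule g x (ex_intro _ _ (Hgd x H))).
    - assert (0 < c). { unfold Rmin in Hc; destruct (Rle_dec s t); lra. }
      assert (exp (k * c) * (k * L c + Ld c) <= 0).
      { apply Rmult_le_0_l. left; apply exp_pos. apply Hineq; lra. }
      assert (exp (k * c) * (k * L c + Ld c) * (t - s) <= 0).
      { apply Rmult_le_0_r; lra. }
      lra. }
  assert (Hglim : filterlim g (at_right 0) (locally (L 0))).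
  { assert (E0 : L 0 = exp (k * 0) * L 0) by (rewrite Rmult_0_r, exp_0; ring).
    rewrite E0. unfold g.
    apply lim_mult; [apply at_right_proper_filter| |exact Hlim].
    apply (filterlim_filter_le_1 (F := locally 0)).
    { apply filter_le_within; try apply locally_filter. }
    apply (continuity_pt_filterlim (fun s => exp (k * s)) 0).
    apply continuity_pt_filterlim.
    apply (@ex_derive_continuous R_AbsRing R_NormedModule (fun s => exp (k * s)) 0).
    auto_derive. exact I. }
  assert (Hle : Rbar_le (g t) (L 0)).
  { apply (filterlim_le (F := at_right 0) (fun _ => g t) g).
    - exists (mkposreal t Htp). intros y Hy Hy0. apply Hdec. exact Hy0.
      unfold ball in Hy; simpl in Hy; unfold AbsRing_ball, abs, minus, plus, opp in Hy; simpl in Hy.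
      apply Rabs_lt_between in Hy. lra.
    - apply filterlim_const.
    - exact Hglim. }
  simpl in Hle. unfold g in Hle.
  replace (L t) with (exp (- k * t) * (exp (k * t) * L t)).
  apply Rmult_le_compat_l. left; apply exp_pos. exact Hle.
  rewrite <- Rmult_assoc, <- exp_plus. replace (- k * t + k * t) with 0 by ring. rewrite exp_0; ring.
Qed.


Definition ell (A B mu al xi0 xi1 xi2 x0 x1 x2 u0 u1 u2 : R) : R :=
  u0^2+u1^2+u2^2 + (A*mu*(x0^2+x1^2+x2^2) + B*(xi0*x0+xi1*x1+xi2*x2)^2) + al*(u0*x0+u1*x1+u2*x2).

Lemma decay_real (A B mu d al xi0 xi1 xi2 : R) (x0 x1 x2 u0 u1 u2 : R -> R) :
  0 < A -> 0 <= B -> 0 <= d -> 0 <= al -> al <= d -> al * d <= A * mu -> al ^ 2 <= A * mu ->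
  (forall t, 0 < t -> is_derive x0 t (u0 t)) ->
  (forall t, 0 < t -> is_derive x1 t (u1 t)) ->
  (forall t, 0 < t -> is_derive x2 t (u2 t)) ->
  (forall t, 0 < t -> is_derive u0 t (- (A*mu) * x0 t - B*xi0*(xi0*x0 t+xi1*x1 t+xi2*x2 t) - d * u0 t)) ->
  (forall t, 0 < t -> is_derive u1 t (- (A*mu) * x1 t - B*xi1*(xi0*x0 t+xi1*x1 t+xi2*x2 t) - d * u1 t)) ->
  (forall t, 0 < t -> is_derive u2 t (- (A*mu) * x2 t - B*xi2*(xi0*x0 t+xi1*x1 t+xi2*x2 t) - d * u2 t)) ->
  filterlim x0 (at_right 0) (locally (x0 0)) ->
  filterlim x1 (at_right 0) (locally (x1 0)) ->
  filterlim x2 (at_right 0) (locally (x2 0)) ->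
  filterlim u0 (at_right 0) (locally (u0 0)) ->
  filterlim u1 (at_right 0) (locally (u1 0)) ->
  filterlim u2 (at_right 0) (locally (u2 0)) ->
  forall t, 0 <= t ->
  ell A B mu al xi0 xi1 xi2 (x0 t) (x1 t) (x2 t) (u0 t) (u1 t) (u2 t) <=
  exp (- (al/3) * t) * ell A B mu al xi0 xi1 xi2 (x0 0) (x1 0) (x2 0) (u0 0) (u1 0) (u2 0).
Proof.
  intros HA HB Hd Hal Hald H1 H2 Dx0 Dx1 Dx2 Du0 Du1 Du2 Lx0 Lx1 Lx2 Lu0 Lu1 Lu2.
  set (q := fun s => xi0*x0 s+xi1*x1 s+xi2*x2 s).
  set (L := fun s => ell A B mu al xi0 xi1 xi2 (x0 s) (x1 s) (x2 s) (u0 s) (u1 s) (u2 s)).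
  set (Ld := fun s =>
     let U := u0 s^2+u1 s^2+u2 s^2 in let X := x0 s^2+x1 s^2+x2 s^2 in
     let P := u0 s*x0 s+u1 s*x1 s+u2 s*x2 s in
     let Q := A*mu*X + B*(q s)^2 in
     -2*d*U + al*U - al*Q - al*d*P).
  apply (gronwall L Ld (al/3)).
  - intros t Ht. unfold L, Ld, ell, q.
    auto_derive.
    + repeat split; eexists; eauto.
    + replace (Derive (fun x : R => x0 x) t) with (u0 t) by (symmetry; apply is_derive_unique; apply Dx0; exact Ht).
      replace (Derive (fun x : R => x1 x) t) with (u1 t) by (symmetry; apply is_derive_unique; apply Dx1; exact Ht).
      replace (Derive (fun x : R => x2 x) t) with (u2 t) by (symmetry; apply is_derive_unique; apply Dx2; exact Ht).
      replace (Derive (fun x : R => u0 x) t) with (- (A*mu) * x0 t - B*xi0*(xi0*x0 t+xi1*x1 t+xi2*x2 t) - d * u0 t) by (symmetry; apply is_derive_unique; apply Du0; exact Ht).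
      replace (Derive (fun x : R => u1 x) t) with (- (A*mu) * x1 t - B*xi1*(xi0*x0 t+xi1*x1 t+xi2*x2 t) - d * u1 t) by (symmetry; apply is_derive_unique; apply Du1; exact Ht).
      replace (Derive (fun x : R => u2 x) t) with (- (A*mu) * x2 t - B*xi2*(xi0*x0 t+xi1*x1 t+xi2*x2 t) - d * u2 t) by (symmetry; apply is_derive_unique; apply Du2; exact Ht).
      cbv zeta. ring.
  - intros t Ht. unfold L, Ld, ell, q. cbv zeta.
    apply alg_main; assumption.
  - unfold L, ell.
    repeat first [ apply lim_plus | apply lim_mult | apply lim_const | assumption
                 | apply at_right_proper_filter ].
Qed.


Lemma exp_mono x y : x <= y -> exp x <= exp y.
Proof. intros [H|H]. left; apply exp_increasing; auto. subst; lra. Qed.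

Lemma Rpower_2 r : 0 < r -> Rpower r 2 = r ^ 2.
Proof. intros Hr. replace 2 with (INR 2) by (simpl; ring). apply Rpower_pow; auto. Qed.

Lemma monopow r s S : 0 < r < 1 -> s <= S -> Rpower r S <= Rpower r s.
Proof.
  intros Hr Hs. unfold Rpower. apply exp_mono.
  assert (ln r < 0) by (rewrite <- ln_1; apply ln_increasing; lra).
  nra.
Qed.

Lemma lowpow r s eps : 0 < eps <= 1 -> eps <= r -> 0 <= s <= 2 -> eps ^ 2 <= Rpower r s.
Proof.
  intros He Hr Hs.
  destruct (Rlt_or_le r 1) as [H1|H1].
  - apply Rle_trans with (Rpower r 2). rewrite Rpower_2 by lra. nra.
    apply monopow; lra.
  - apply Rle_trans with (Rpower r 0). rewrite Rpower_O by lra. nra.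
    apply Rle_Rpower; lra.
Qed.

Lemma deriv_Re (f : R -> C) t l : is_derive f t l -> is_derive (fun s => Re (f s)) t (Re l).
Proof.
  intros H. unfold is_derive in *.
  apply (filterdiff_comp' f (fun z : C => Re z) t _ (fun z : C => Re z) H).
  apply filterdiff_linear. apply (@is_linear_fst R_AbsRing R_NormedModule R_NormedModule).
Qed.
Lemma deriv_Im (f : R -> C) t l : is_derive f t l -> is_derive (fun s => Im (f s)) t (Im l).
Proof.
  intros H. unfold is_derive in *.
  apply (filterdiff_comp' f (fun z : C => Im z) t _ (fun z : C => Im z) H).
  apply filterdiff_linear. apply (@is_linear_snd R_AbsRing R_NormedModule R_NormedModule).
Qed.

Lemma lim_Re (f : R -> C) F {FF : Filter F} l :
  filterlim f F (locally l) -> filterlim (fun s => Re (f s)) F (locally (Re l)).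
Proof.
  intros H. apply (filterlim_comp _ _ _ f (fun z : C => Re z) F (locally l)); auto.
  destruct l as [l1 l2]. apply (@continuous_fst R_UniformSpace R_UniformSpace l1 l2).
Qed.
Lemma lim_Im (f : R -> C) F {FF : Filter F} l :
  filterlim f F (locally l) -> filterlim (fun s => Im (f s)) F (locally (Im l)).
Proof.
  intros H. apply (filterlim_comp _ _ _ f (fun z : C => Im z) F (locally l)); auto.
  destruct l as [l1 l2]. apply (@continuous_snd R_UniformSpace R_UniformSpace l1 l2).
Qed.


Lemma is_derive_eq (f : R -> R) t l l' : is_derive f t l -> l = l' -> is_derive f t l'.
Proof. intros H ->; exact H. Qed.

Lemma Epha_split a b xi (w v : nat -> C) :
  Epha a b xi w v =
  ell (a^2) (b^2-a^2) (xnorm xi ^ 2) 0 (xi 0%nat) (xi 1%nat) (xi 2%nat)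
    (Re (w 0%nat)) (Re (w 1%nat)) (Re (w 2%nat)) (Re (v 0%nat)) (Re (v 1%nat)) (Re (v 2%nat)) +
  ell (a^2) (b^2-a^2) (xnorm xi ^ 2) 0 (xi 0%nat) (xi 1%nat) (xi 2%nat)
    (Im (w 0%nat)) (Im (w 1%nat)) (Im (w 2%nat)) (Im (v 0%nat)) (Im (v 1%nat)) (Im (v 2%nat)).
Proof.
  unfold Epha, csq, ell. rewrite !Cmod2_alt. unfold dotc, Re, Im. simpl. ring.
Qed.

Lemma ell_equiv (A B mu al xi0 xi1 xi2 x0 x1 x2 u0 u1 u2 : R) :
  0 < A -> 0 <= B -> 0 <= al -> al ^ 2 <= A * mu ->
  ell A B mu 0 xi0 xi1 xi2 x0 x1 x2 u0 u1 u2 / 2 <= ell A B mu al xi0 xi1 xi2 x0 x1 x2 u0 u1 u2 /\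
  ell A B mu al xi0 xi1 xi2 x0 x1 x2 u0 u1 u2 <= 3 * ell A B mu 0 xi0 xi1 xi2 x0 x1 x2 u0 u1 u2 / 2.
Proof.
  intros HA HB Hal H2.
  pose proof (alg_equiv A B mu al (xi0*x0+xi1*x1+xi2*x2) x0 x1 x2 u0 u1 u2 HA HB Hal H2) as E.
  cbv zeta in E. unfold ell. rewrite Rmult_0_l, Rplus_0_r. exact E.
Qed.

Lemma final_ineq ex eR eI ER EI lR lI LR LI :
  0 < ex ->
  eR / 2 <= lR /\ lR <= 3 * eR / 2 -> lR <= ex * LR -> ER / 2 <= LR /\ LR <= 3 * ER / 2 ->
  eI / 2 <= lI /\ lI <= 3 * eI / 2 -> lI <= ex * LI -> EI / 2 <= LI /\ LI <= 3 * EI / 2 ->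
  eR + eI <= 3 * ex * (ER + EI).
Proof.
  intros Hex [A1 A2] A3 [A4 A5] [B1 B2] B3 [B4 B5].
  assert (ex * LR <= ex * (3 * ER / 2)) by (apply Rmult_le_compat_l; lra).
  assert (ex * LI <= ex * (3 * EI / 2)) by (apply Rmult_le_compat_l; lra).
  lra.
Qed.

Lemma decay_complex a b theta xi (w v : R -> nat -> C) al :
  0 < a ^ 2 -> a ^ 2 < b ^ 2 ->
  fourier_solution a b theta xi w v ->
  let d := rpow (xnorm xi) (2 * theta) in
  let mu := xnorm xi ^ 2 in
  0 <= d -> 0 <= al -> al <= d -> al * d <= a^2 * mu -> al ^ 2 <= a^2 * mu ->
  forall t, 0 <= t ->
  Epha a b xi (w t) (v t) <= 3 * exp (- (al/3) * t) * Epha a b xi (w 0) (v 0).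
Proof.
  intros Ha Hab H d mu Hd Hal Hald H1 H2 t Ht.
  destruct (H 0%nat ltac:(lia)) as [Dw0 [Dv0 [Lw0 Lv0]]].
  destruct (H 1%nat ltac:(lia)) as [Dw1 [Dv1 [Lw1 Lv1]]].
  destruct (H 2%nat ltac:(lia)) as [Dw2 [Dv2 [Lw2 Lv2]]].
  assert (HB : 0 <= b^2 - a^2) by lra.
  pose proof (decay_real (a^2) (b^2-a^2) mu d al (xi 0%nat) (xi 1%nat) (xi 2%nat)
    (fun s => Re (w s 0%nat)) (fun s => Re (w s 1%nat)) (fun s => Re (w s 2%nat))
    (fun s => Re (v s 0%nat)) (fun s => Re (v s 1%nat)) (fun s => Re (v s 2%nat))
    Ha HB Hd Hal Hald H1 H2) as HR.
  pose proof (decay_real (a^2) (b^2-a^2) mu d al (xi 0%nat) (xi 1%nat) (xi 2%nat)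
    (fun s => Im (w s 0%nat)) (fun s => Im (w s 1%nat)) (fun s => Im (w s 2%nat))
    (fun s => Im (v s 0%nat)) (fun s => Im (v s 1%nat)) (fun s => Im (v s 2%nat))
    Ha HB Hd Hal Hald H1 H2) as HI.
  assert (LR : forall s, 0 <= s ->
    ell (a ^ 2) (b ^ 2 - a ^ 2) mu al (xi 0%nat) (xi 1%nat) (xi 2%nat)
      (Re (w s 0%nat)) (Re (w s 1%nat)) (Re (w s 2%nat)) (Re (v s 0%nat)) (Re (v s 1%nat)) (Re (v s 2%nat))
    <= exp (- (al / 3) * s) *
    ell (a ^ 2) (b ^ 2 - a ^ 2) mu al (xi 0%nat) (xi 1%nat) (xi 2%nat)
      (Re (w 0 0%nat)) (Re (w 0 1%nat)) (Re (w 0 2%nat)) (Re (v 0 0%nat)) (Re (v 0 1%nat)) (Re (v 0 2%nat))).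
  { apply HR; clear HR HI.
    all: try (intros; apply deriv_Re; auto; fail).
    all: try (intros; apply lim_Re; auto; try apply at_right_proper_filter; fail).
    all: intros s Hs; eapply is_derive_eq; [apply deriv_Re; auto|].
    all: unfold dotc, d, mu, Re, Im; simpl; ring. }
  assert (LI : forall s, 0 <= s ->
    ell (a ^ 2) (b ^ 2 - a ^ 2) mu al (xi 0%nat) (xi 1%nat) (xi 2%nat)
      (Im (w s 0%nat)) (Im (w s 1%nat)) (Im (w s 2%nat)) (Im (v s 0%nat)) (Im (v s 1%nat)) (Im (v s 2%nat))
    <= exp (- (al / 3) * s) *
    ell (a ^ 2) (b ^ 2 - a ^ 2) mu al (xi 0%nat) (xi 1%nat) (xi 2%nat)
      (Im (w 0 0%nat)) (Im (w 0 1%nat)) (Im (w 0 2%nat)) (Im (v 0 0%nat)) (Im (v 0 1%nat)) (Im (v 0 2%nat))).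
  { apply HI; clear HR HI.
    all: try (intros; apply deriv_Im; auto; fail).
    all: try (intros; apply lim_Im; auto; try apply at_right_proper_filter; fail).
    all: intros s Hs; eapply is_derive_eq; [apply deriv_Im; auto|].
    all: unfold dotc, d, mu, Re, Im; simpl; ring. }
  specialize (LR t Ht). specialize (LI t Ht).
  rewrite !Epha_split. fold mu.
  assert (Hal0 : 0 <= al) by lra.
  assert (HA : 0 < a^2) by lra.
  pose proof (ell_equiv (a^2) (b^2-a^2) mu al (xi 0%nat) (xi 1%nat) (xi 2%nat)
    (Re (w t 0%nat)) (Re (w t 1%nat)) (Re (w t 2%nat)) (Re (v t 0%nat)) (Re (v t 1%nat)) (Re (v t 2%nat)) HA HB Hal0 H2) as E1.
  pose proof (ell_equiv (a^2) (b^2-a^2) mu al (xi 0%nat) (xi 1%nat) (xi 2%nat)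
    (Im (w t 0%nat)) (Im (w t 1%nat)) (Im (w t 2%nat)) (Im (v t 0%nat)) (Im (v t 1%nat)) (Im (v t 2%nat)) HA HB Hal0 H2) as E2.
  pose proof (ell_equiv (a^2) (b^2-a^2) mu al (xi 0%nat) (xi 1%nat) (xi 2%nat)
    (Re (w 0 0%nat)) (Re (w 0 1%nat)) (Re (w 0 2%nat)) (Re (v 0 0%nat)) (Re (v 0 1%nat)) (Re (v 0 2%nat)) HA HB Hal0 H2) as E3.
  pose proof (ell_equiv (a^2) (b^2-a^2) mu al (xi 0%nat) (xi 1%nat) (xi 2%nat)
    (Im (w 0 0%nat)) (Im (w 0 1%nat)) (Im (w 0 2%nat)) (Im (v 0 0%nat)) (Im (v 0 1%nat)) (Im (v 0 2%nat)) HA HB Hal0 H2) as E4.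
  eapply final_ineq; [apply exp_pos|apply E1|apply LR|apply E3|apply E2|apply LI|apply E4].
Qed.


Lemma rpow_pos r y : 0 < r -> rpow r y = Rpower r y.
Proof. intros Hr. unfold rpow. destruct (Req_EM_T r 0); [lra|reflexivity]. Qed.

Lemma rpow_nonneg r y : 0 <= rpow r y.
Proof.
  unfold rpow. destruct (Req_EM_T r 0); [destruct (Req_EM_T y 0); lra|].
  left; apply exp_pos.
Qed.

Lemma Epha_nonneg a b xi w v : a ^ 2 < b ^ 2 -> 0 <= Epha a b xi w v.
Proof.
  intros Hab. unfold Epha, csq.
  assert (forall z, 0 <= Cmod z ^ 2) by (intros; apply pow2_ge_0).
  assert (0 <= a^2) by apply pow2_ge_0.
  assert (0 <= xnorm xi ^ 2) by apply pow2_ge_0.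
  assert (0 <= a ^ 2 * xnorm xi ^ 2) by (apply Rmult_le_pos; auto).
  assert (0 <= Cmod (w 0%nat) ^ 2 + Cmod (w 1%nat) ^ 2 + Cmod (w 2%nat) ^ 2) by
    (pose proof (H (w 0%nat)); pose proof (H (w 1%nat)); pose proof (H (w 2%nat)); lra).
  assert (0 <= Cmod (v 0%nat) ^ 2 + Cmod (v 1%nat) ^ 2 + Cmod (v 2%nat) ^ 2) by
    (pose proof (H (v 0%nat)); pose proof (H (v 1%nat)); pose proof (H (v 2%nat)); lra).
  assert (0 <= a ^ 2 * xnorm xi ^ 2 * (Cmod (w 0%nat) ^ 2 + Cmod (w 1%nat) ^ 2 + Cmod (w 2%nat) ^ 2))
    by (apply Rmult_le_pos; auto).
  assert (0 <= (b ^ 2 - a ^ 2) * Cmod (dotc xi w) ^ 2) by (apply Rmult_le_pos; [lra| auto]).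
  lra.
Qed.

Lemma alpha_props (A mu d k : R) :
  0 < A -> 0 <= mu -> 0 <= d -> 0 < k -> k <= 1 -> k <= A ->
  let al := d * (A * mu) / (d ^ 2 + A * mu) in
  0 <= al /\ al <= d /\ al * d <= A * mu /\ al ^ 2 <= A * mu /\
  (forall X, 0 <= X -> X <= d -> X * d <= mu -> k * X / 2 <= al).
Proof.
  intros HA Hmu Hd Hk Hk1 HkA al.
  assert (HAm : 0 <= A * mu) by (apply Rmult_le_pos; lra).
  assert (Hd2 : 0 <= d ^ 2) by apply pow2_ge_0.
  destruct (Req_dec (d ^ 2 + A * mu) 0) as [Hz|Hz].
  - assert (Hd0 : d = 0) by nra. assert (A * mu = 0) by lra.
    assert (al = 0) by (unfold al; rewrite Hd0; unfold Rdiv; ring).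
    repeat split; try nra.
    intros X HX HXd _. nra.
  - assert (Hden : 0 < d ^ 2 + A * mu) by lra.
    assert (Hal : al * (d ^ 2 + A * mu) = d * (A * mu)) by (unfold al; field; lra).
    assert (Hal0 : 0 <= al).
    { unfold al. apply Rmult_le_pos. apply Rmult_le_pos; lra. left; apply Rinv_0_lt_compat; lra. }
    assert (Hald : al <= d).
    { apply Rmult_le_reg_r with (d ^ 2 + A * mu); auto. rewrite Hal. nra. }
    assert (Hald2 : al * d <= A * mu).
    { apply Rmult_le_reg_r with (d ^ 2 + A * mu); auto.
      replace (al * d * (d ^ 2 + A * mu)) with (d * (al * (d ^ 2 + A * mu))) by ring.
      rewrite Hal. nra. }
    repeat split; auto.
    + nra.
    + intros X HX HXd HXm.
      apply Rmult_le_reg_r with (d ^ 2 + A * mu); auto. rewrite Hal.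
      assert (k * X * d * d <= k * mu * d).
      { assert (X * d * d <= mu * d) by (apply Rmult_le_compat_r; lra).
        assert (0 <= k) by lra. nra. }
      assert (k * mu * d <= A * mu * d).
      { assert (0 <= mu * d) by (apply Rmult_le_pos; lra). nra. }
      assert (k * X * (A * mu) <= d * (A * mu)).
      { assert (k * X <= X) by nra. apply Rmult_le_compat_r; lra. }
      nra.
Qed.

Theorem lemma3p1 (a b theta : R) :
  0 < a ^ 2 -> a ^ 2 < b ^ 2 -> 0 <= theta <= 1 ->
  exists eps0 : R, 0 < eps0 /\
  forall eps : R, 0 < eps <= eps0 ->
  exists c K : R, 0 < c /\ 0 < K /\
  forall (xi : nat -> R) (w v : R -> nat -> C),
    fourier_solution a b theta xi w v ->
    forall t : R, 0 <= t ->
      (xnorm xi < eps ->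
         Epha a b xi (w t) (v t) <=
         K * exp (- c * rpow (xnorm xi) (2 * Rmax (1 - theta) theta) * t)
           * Epha a b xi (w 0) (v 0)) /\
      (eps <= xnorm xi ->
         Epha a b xi (w t) (v t) <= K * exp (- c * t) * Epha a b xi (w 0) (v 0)).
Proof.
  intros Ha Hab Hth.
  exists (1/2). split; [lra|]. intros eps [He0 He1].
  set (k := Rmin 1 (a ^ 2)).
  assert (Hk : 0 < k) by (unfold k; apply Rmin_glb_lt; lra).
  assert (Hk1 : k <= 1) by apply Rmin_l.
  assert (HkA : k <= a ^ 2) by apply Rmin_r.
  assert (Heps2 : 0 < eps ^ 2) by (apply pow_lt; lra).
  assert (Heps21 : eps ^ 2 <= 1) by nra.
  exists (k * eps ^ 2 / 6), 3. split; [apply Rmult_lt_0_compat; [nra|lra]|]. split; [lra|].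
  intros xi w v H t Ht.
  set (r := xnorm xi).
  assert (Hr : 0 <= r) by apply sqrt_pos.
  set (d := rpow r (2 * theta)).
  assert (Hd : 0 <= d) by apply rpow_nonneg.
  assert (Hmu : 0 <= r ^ 2) by apply pow2_ge_0.
  destruct (alpha_props (a ^ 2) (r ^ 2) d k Ha Hmu Hd Hk Hk1 HkA) as [Hal0 [Hald [Hald2 [Hal2 Hrate]]]].
  set (al := d * (a ^ 2 * r ^ 2) / (d ^ 2 + a ^ 2 * r ^ 2)) in *.
  pose proof (decay_complex a b theta xi w v al Ha Hab H Hd Hal0 Hald Hald2 Hal2 t Ht) as Hdec.
  pose proof (Epha_nonneg a b xi (w 0) (v 0) Hab) as HE0.
  assert (Hfin : forall c', c' <= al / 3 ->
    Epha a b xi (w t) (v t) <= 3 * exp (- c' * t) * Epha a b xi (w 0) (v 0)).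
  { intros c' Hc'. eapply Rle_trans; [exact Hdec|].
    apply Rmult_le_compat_r; auto. apply Rmult_le_compat_l; [lra|].
    apply exp_mono. nra. }
  assert (Hm1 : 1 - theta <= Rmax (1 - theta) theta) by apply Rmax_l.
  assert (Hm2 : theta <= Rmax (1 - theta) theta) by apply Rmax_r.
  split.
  - intros Hsmall. fold r in Hsmall.
    replace (- (k * eps ^ 2 / 6) * rpow r (2 * Rmax (1 - theta) theta) * t)
      with (- (k * eps ^ 2 / 6 * rpow r (2 * Rmax (1 - theta) theta)) * t) by ring.
    apply Hfin.
    destruct (Req_dec r 0) as [Hr0|Hr0].
    + assert (rpow r (2 * Rmax (1 - theta) theta) = 0).
      { unfold rpow. destruct (Req_EM_T r 0); [|lra].
        destruct (Req_EM_T (2 * Rmax (1 - theta) theta) 0); [lra|reflexivity]. }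
      rewrite H0. lra.
    + assert (Hrp : 0 < r) by lra.
      rewrite rpow_pos by exact Hrp.
      set (T := Rpower r (2 * Rmax (1 - theta) theta)).
      assert (HT : 0 <= T) by (left; apply exp_pos).
      assert (Hdr : d = Rpower r (2 * theta)) by (unfold d; apply rpow_pos; exact Hrp).
      assert (HTd : T <= d).
      { rewrite Hdr. apply monopow; lra. }
      assert (HTm : T * d <= r ^ 2).
      { rewrite Hdr. unfold T. rewrite <- Rpower_plus. rewrite <- Rpower_2 by exact Hrp.
        apply monopow; lra. }
      pose proof (Hrate T HT HTd HTm).
      assert (k * eps ^ 2 * T <= k * T) by (assert (0 <= k * T) by nra; nra).
      lra.
  - intros Hlarge. fold r in Hlarge.
    apply Hfin.
    assert (Hrp : 0 < r) by lra.
    assert (Hdr : d = Rpower r (2 * theta)) by (unfold d; apply rpow_pos; exact Hrp).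
    assert (HXd : eps ^ 2 <= d) by (rewrite Hdr; apply lowpow; lra).
    assert (HX2 : eps ^ 2 <= Rpower r (2 - 2 * theta)) by (apply lowpow; lra).
    assert (HXm : eps ^ 2 * d <= r ^ 2).
    { apply Rle_trans with (Rpower r (2 - 2 * theta) * d).
      apply Rmult_le_compat_r; lra.
      rewrite Hdr, <- Rpower_plus. rewrite <- Rpower_2 by exact Hrp.
      right; f_equal; ring. }
    pose proof (Hrate (eps ^ 2) (Rlt_le _ _ Heps2) HXd HXm). lra.
Qed.
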